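(* Let $\phi$ be a singular-expansive flow of a compact metric space $X$. Then: (1) the set of periodic orbits of $\phi$ is countable; (2) if $Sing(\phi)=\emptyset$ or $Sing(\phi)$ consists of finitely many isolated points of $X$, then $\phi$ is expansive; (3) if $Sing(\phi)$ is dynamically isolated, then for every $t>0$ the set of periodic orbits of $\phi$ with period in $(0,t]$ is finite.
   Context: A flow is a continuous $\phi:\mathbb{R}\times X\to X$, $\phi_t(x)=\phi(t,x)$, $\phi_0=\mathrm{id}$, $\phi_{t+s}=\phi_t\circ\phi_s$; $\phi_I(x)=\{\phi_t(x):t\in I\}$. $Sing(\phi)=\{\sigma:\phi_t(\sigma)=\sigma\ \forall t\}$; $dist(z,A)=\inf_{a\in A}d(z,a)$, with $dist(z,\emptyset)=diam(X)$. A point $x\notin Sing(\phi)$ is periodic if $\phi_t(x)=x$ for some $t>0$; the least such $t$ is its period. A compact invariant set $K$ ($\phi_t(K)=K$ for all $t$) is dynamically isolated if there is a neighborhood $U$ of $K$ with $K=\bigcap_{t\in\mathbb{R}}\phi_t(U)$. $\phi$ is singular-expansive (on $X$) if for every $\epsilon>0$ there is $\delta>0$ such that whenever $x,y\in X$ and an increasing homeomorphism $s:\mathbb{R}\to\mathbb{R}$ satisfy $d(\phi_t(x),\phi_{s(t)}(y))\le\delta\,dist(\phi_t(x),Sing(\phi))$ for all $t$, then $\phi_{s(t_0)}(y)\in\phi_{[t_0-\epsilon,t_0+\epsilon]}(x)$ for some $t_0$. $\phi$ is expansive on $\Lambda\subset X$ (Bowen–Walters) if for every $\epsilon>0$ there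 is $\delta>0$ such that whenever $x,y\in\Lambda$ and a continuous $s:\mathbb{R}\to\mathbb{R}$ with $s(0)=0$ satisfy $d(\phi_t(x),\phi_{s(t)}(y))\le\delta$ for all $t$, then $y\in\phi_{[-\epsilon,\epsilon]}(x)$; expansive means expansive on $X$. *)

(* Defs.v *)
From Stdlib Require Import Reals List ClassicalEpsilon.
From Coquelicot Require Import Coquelicot.
Open Scope R_scope.

Record MetricSpace := {
  carrier :> Type;
  d : carrier -> carrier -> R;
  d_nonneg : forall x y, 0 <= d x y;
  d_eq0 : forall x y, d x y = 0 <-> x = y;
  d_sym : forall x y, d x y = d y x;
  d_triangle : forall x y z, d x z <= d x y + d y z
}.

Arguments d {_}.

Section Metric.
Variable X : MetricSpace.

Definition open_set (U : X -> Prop) : Prop :=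
  forall x, U x -> exists r, 0 < r /\ forall y, d x y < r -> U y.

Definition compact_set (K : X -> Prop) : Prop :=
  forall (I : Type) (U : I -> X -> Prop),
    (forall i, open_set (U i)) ->
    (forall x, K x -> exists i, U i x) ->
    exists l : list I, forall x, K x -> exists i, In i l /\ U i x.

Definition compact_space : Prop := compact_set (fun _ => True).

Definition diam : R := real (Lub_Rbar (fun r => exists x y : X, r = d x y)).

Definition dist (z : X) (A : X -> Prop) : R :=
  match excluded_middle_informative (exists a, A a) with
  | left _ => real (Glb_Rbar (fun r => exists a, A a /\ r = d z a))
  | right _ => diam
  end.

Definition is_flow (phi : R -> X -> X) : Prop :=
  (forall t x eps, 0 < eps -> exists delta, 0 < delta /\
      forall s y, Rabs (s - t) < delta -> d x y < delta ->
        d (phi t x) (phi s y) < eps) /\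
  (forall x, phi 0 x = x) /\
  (forall t s x, phi (t + s) x = phi t (phi s x)).

Variable phi : R -> X -> X.

Definition Sing (z : X) : Prop := forall t, phi t z = z.

Definition orbit (x : X) : X -> Prop := fun z => exists t, z = phi t x.

Definition periodic_point (x : X) : Prop :=
  ~ Sing x /\ exists t, 0 < t /\ phi t x = x.

Definition has_period (x : X) (T : R) : Prop :=
  0 < T /\ phi T x = x /\ forall t, 0 < t < T -> phi t x <> x.

Definition periodic_orbit (O : X -> Prop) : Prop :=
  exists x, periodic_point x /\ O = orbit x.

Definition periodic_orbit_period_le (t : R) (O : X -> Prop) : Prop :=
  exists x T, periodic_point x /\ has_period x T /\ 0 < T <= t /\ O = orbit x.

Definition countable_family (F : (X -> Prop) -> Prop) : Prop :=
  exists f : (X -> Prop) -> nat,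
    forall O1 O2, F O1 -> F O2 -> f O1 = f O2 -> O1 = O2.

Definition finite_family (F : (X -> Prop) -> Prop) : Prop :=
  exists l : list (X -> Prop), forall O, F O -> In O l.

Definition increasing_homeo (s : R -> R) : Prop :=
  (forall a b, a < b -> s a < s b) /\ continuity s /\
  exists g : R -> R, continuity g /\
    (forall t, g (s t) = t) /\ (forall t, s (g t) = t).

Definition singular_expansive : Prop :=
  forall eps, 0 < eps -> exists delta, 0 < delta /\
    forall (x y : X) (s : R -> R), increasing_homeo s ->
      (forall t, d (phi t x) (phi (s t) y) <= delta * dist (phi t x) Sing) ->
      exists t0 u, t0 - eps <= u <= t0 + eps /\ phi (s t0) y = phi u x.

Definition expansive_on (Lambda : X -> Prop) : Prop :=
  forall eps, 0 < eps -> exists delta, 0 < delta /\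
    forall (x y : X) (s : R -> R), Lambda x -> Lambda y ->
      continuity s -> s 0 = 0 ->
      (forall t, d (phi t x) (phi (s t) y) <= delta) ->
      exists u, - eps <= u <= eps /\ y = phi u x.

Definition expansive : Prop := expansive_on (fun _ => True).

Definition isolated_point (x : X) : Prop :=
  exists r, 0 < r /\ forall y, d x y < r -> y = x.

Definition invariant_set (K : X -> Prop) : Prop :=
  forall t z, K z <-> exists u, K u /\ z = phi t u.

Definition neighborhood (U K : X -> Prop) : Prop :=
  exists V, open_set V /\ (forall z, K z -> V z) /\ (forall z, V z -> U z).

Definition dynamically_isolated (K : X -> Prop) : Prop :=
  compact_set K /\ invariant_set K /\
  exists U, neighborhood U K /\
    forall z, K z <-> (forall t, exists u, U u /\ z = phi t u).

End Metric.

(* Main.v *)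
Require Import Defs.
From Stdlib Require Import Reals List Lra Lia ClassicalEpsilon Classical FunctionalExtensionality PropExtensionality.
From Coquelicot Require Import Coquelicot.
Open Scope R_scope.

Lemma mychoice {A B : Type} (P : A -> B -> Prop) :
  (forall a, exists b, P a b) -> exists f : A -> B, forall a, P a (f a).
Proof.
  intros H. exists (fun a => proj1_sig (constructive_indefinite_description _ (H a))).
  intro a. exact (proj2_sig (constructive_indefinite_description _ (H a))).
Qed.

Lemma list_min {A : Type} (f : A -> R) (l : list A) :
  (forall z, In z l -> 0 < f z) -> exists m, 0 < m /\ forall z, In z l -> m <= f z.
Proof.
  induction l as [|a l IH]; intros H.
  - exists 1. split; [lra|]. intros z [].
  - destruct IH as [m [Hm Hm']]. { intros z Hz. apply H. right; exact Hz. }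
    exists (Rmin m (f a)). split.
    + apply Rmin_pos; [exact Hm| apply H; left; reflexivity].
    + intros z [<-|Hz].
      * apply Rmin_r.
      * eapply Rle_trans; [apply Rmin_l| apply Hm'; exact Hz].
Qed.


Fixpoint trin (n : nat) : nat := match n with O => O | S m => (trin m + S m)%nat end.
Lemma trin_mono n m : (n < m)%nat -> (trin n + n < trin m)%nat.
Proof.
  induction m as [|m IH]; intros H; [lia|]. simpl.
  destruct (Nat.eq_dec n m) as [->|Hne]; [lia|]. specialize (IH ltac:(lia)). lia.
Qed.
Definition npair (a b : nat) : nat := (trin (a + b) + b)%nat.
Lemma npair_inj a b c e : npair a b = npair c e -> a = c /\ b = e.
Proof.
  unfold npair. intros H.
  destruct (Nat.lt_trichotomy (a + b) (c + e)) as [Hl|[Heq|Hl]].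
  - pose proof (trin_mono _ _ Hl). lia.
  - rewrite Heq in H. lia.
  - pose proof (trin_mono _ _ Hl). lia.
Qed.

Lemma Int_part_nonneg r : 0 <= r -> (0 <= Int_part r)%Z.
Proof.
  intros Hr. destruct (base_Int_part r) as [_ H].
  assert (IZR (Int_part r) > -1) by lra.
  apply lt_IZR in H0. lia.
Qed.

Lemma Int_part_close a b : 0 <= a -> 0 <= b -> Z.to_nat (Int_part a) = Z.to_nat (Int_part b) ->
  Rabs (a - b) < 1.
Proof.
  intros Ha Hb H.
  pose proof (Int_part_nonneg a Ha). pose proof (Int_part_nonneg b Hb).
  assert (E : Int_part a = Int_part b) by lia.
  destruct (base_Int_part a). destruct (base_Int_part b). rewrite E in *.
  apply Rabs_def1; lra.
Qed.


Lemma cont_from (f : R -> R) x : (forall e, 0 < e -> exists dl, 0 < dl /\ forall y, Rabs (y - x) < dl ->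
  Rabs (f y - f x) < e) -> continuity_pt f x.
Proof.
  intros H. unfold continuity_pt, continue_in, limit1_in, limit_in. intros e He.
  destruct (H e He) as [dl [Hdl Hf]]. exists dl. split; [exact Hdl|].
  intros y [_ Hy]. simpl in *. unfold R_dist in *. apply Hf. exact Hy.
Qed.


Lemma lip_cont (f : R -> R) K : 0 < K -> (forall a b, Rabs (f a - f b) <= K * Rabs (a - b)) -> continuity f.
Proof.
  intros HK Hf x. unfold continuity_pt, continue_in, limit1_in, limit_in. intros e He.
  exists (e / K). split. { apply Rdiv_lt_0_compat; lra. }
  intros y [_ Hy]. simpl in *. unfold R_dist in *. 
  eapply Rle_lt_trans; [apply Hf|].
  apply Rmult_lt_compat_l with (r := K) in Hy; [|exact HK].
  replace (K * (e / K)) with e in Hy by (field; lra). exact Hy.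
Qed.

Lemma RInt_addc (f : R -> R) a b c : ex_RInt f a b -> RInt (fun u => f u + c) a b = RInt f a b + (b - a) * c.
Proof.
intros H. transitivity (RInt (fun x => plus (f x) ((fun _ => c) x)) a b); [reflexivity|].
rewrite (RInt_plus (V := R_CompleteNormedModule)); [|exact H| apply ex_RInt_const].
rewrite (RInt_const (V := R_CompleteNormedModule)). reflexivity.
Qed.

Lemma RInt_shift (f : R -> R) a b h : ex_RInt f (a+h) (b+h) -> RInt (fun u => f (u + h)) a b = RInt f (a+h) (b+h).
Proof.
intros H. pose proof (RInt_comp_lin f 1 h a b). rewrite !Rmult_1_l in H0. rewrite <- H0 by exact H.
apply RInt_ext. intros. unfold scal; simpl. unfold mult; simpl. rewrite Rmult_1_l, Rmult_1_l. reflexivity.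
Qed.

Lemma RInt_cst (a b c : R) : RInt (fun _ => c) a b = (b - a) * c.
Proof. rewrite (RInt_const (V := R_CompleteNormedModule)). reflexivity. Qed.

Lemma Rmin_le_Rmax a b : Rmin a b <= Rmax a b.
Proof. unfold Rmin, Rmax. destruct (Rle_dec a b); lra. Qed.

Lemma ivt_between (f : R -> R) a b c : continuity f -> a <= b -> (f a - c) * (f b - c) <= 0 ->
  exists t, a <= t <= b /\ f t = c.
Proof.
  intros Hf Hab Hp.
  destruct (IVT_cor (fun u => f u - c) a b) as [t [Ht Ht']]; auto.
  - apply continuity_minus; [exact Hf| apply continuity_const; intros ? ?; reflexivity].
  - exists t. split; [exact Ht| lra].
Qed.

Lemma smooth_homeo (s : R -> R) h mu : continuity s -> 0 < h ->
  (forall sg, Rabs (s (sg + h) - s sg - h) < h / 2) ->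
  (forall sg sg', sg <= sg' <= sg + h -> Rabs (s sg' - s sg) < mu) ->
  exists H, increasing_homeo H /\ forall sg, Rabs (H sg - s sg) <= mu.
Proof.
  intros Hs Hh Hinc Hosc.
  assert (Hex : forall a b, ex_RInt s a b).
  { intros a b. apply (ex_RInt_continuous (V := R_CompleteNormedModule)). intros z _. apply (proj1 (continuity_pt_filterlim s z)). apply Hs. }
  assert (Hexc : forall f, continuity f -> forall a b, ex_RInt f a b).
  { intros f Hf a b. apply (ex_RInt_continuous (V := R_CompleteNormedModule)). intros z _.
    apply (proj1 (continuity_pt_filterlim f z)). apply Hf. }
  assert (Hsh : continuity (fun u => s (u + h))).
  { apply (continuity_comp (fun u => u + h) s); [|exact Hs].
    apply continuity_plus; [apply derivable_continuous, derivable_id|].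
    apply continuity_const; intros ? ?; reflexivity. }
  set (H := fun sg => RInt s sg (sg + h) / h).
  assert (Hincr : forall a b, a <= b -> (b - a) / 2 <= H b - H a <= 3 * (b - a) / 2).
  { intros a b Hab.
    assert (E : H b - H a = (RInt (fun u => s (u + h)) a b - RInt s a b) / h).
    { unfold H. rewrite RInt_shift by apply Hex.
      pose proof (RInt_Chasles s a (a + h) (b + h) (Hex _ _) (Hex _ _)).
      pose proof (RInt_Chasles s a b (b + h) (Hex _ _) (Hex _ _)).
      change (plus ?x ?y) with (x + y) in *.
      unfold Rdiv. rewrite <- Rmult_minus_distr_r. f_equal. lra. }
    rewrite E.
    assert (Hc1 : forall c, continuity (fun u => s u + c)).
    { intros c. apply continuity_plus; [exact Hs|]. apply continuity_const; intros ? ?; reflexivity. }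
    assert (L : RInt (fun u => s u + h / 2) a b <= RInt (fun u => s (u + h)) a b).
    { apply RInt_le; [exact Hab| apply Hexc, Hc1| apply Hexc, Hsh|].
      intros x Hx. pose proof (Hinc x) as H0. apply Rabs_def2 in H0. lra. }
    assert (U : RInt (fun u => s (u + h)) a b <= RInt (fun u => s u + 3 * h / 2) a b).
    { apply RInt_le; [exact Hab| apply Hexc, Hsh| apply Hexc, Hc1|].
      intros x Hx. pose proof (Hinc x) as H0. apply Rabs_def2 in H0. lra. }
    rewrite !RInt_addc in L, U by apply Hex.
    split.
    - apply Rmult_le_reg_r with h; [lra|]. unfold Rdiv at 2. rewrite Rmult_assoc, Rinv_l, Rmult_1_r by lra. nra.
    - apply Rmult_le_reg_r with h; [lra|]. unfold Rdiv at 1. rewrite Rmult_assoc, Rinv_l, Rmult_1_r by lra. nra. }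
  assert (Hlip : forall a b, Rabs (H a - H b) <= 3/2 * Rabs (a - b)).
  { intros a b. destruct (Rle_dec a b) as [Hab|Hab].
    - pose proof (Hincr a b Hab). rewrite (Rabs_left1 (a - b)) by lra.
      rewrite Rabs_left1 by lra. lra.
    - pose proof (Hincr b a ltac:(lra)). rewrite (Rabs_right (a - b)) by lra.
      rewrite Rabs_right by lra. lra. }
  assert (Hcont : continuity H) by (apply (lip_cont _ (3/2)); [lra| exact Hlip]).
  assert (Hsurj : forall y, exists sg, H sg = y).
  { intros y. set (m := Rabs (y - H 0)).
    pose proof (Hincr (-(2*m)) 0 ltac:(unfold m; pose proof (Rabs_pos (y - H 0)); lra)).
    pose proof (Hincr 0 (2*m) ltac:(unfold m; pose proof (Rabs_pos (y - H 0)); lra)).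
    pose proof (Rle_abs (y - H 0)). pose proof (Rle_abs (- (y - H 0))). rewrite Rabs_Ropp in H3. fold m in H2, H3.
    destruct (ivt_between H (-(2*m)) (2*m) y Hcont) as [t [_ Ht]].
    { unfold m; pose proof (Rabs_pos (y - H 0)); lra. }
    { assert (H (- (2 * m)) - y <= 0) by lra. assert (0 <= H (2 * m) - y) by lra. nra. }
    exists t. exact Ht. }
  destruct (mychoice _ Hsurj) as [g Hg].
  exists H. split.
  - split; [|split; [exact Hcont|]].
    + intros a b Hab. pose proof (Hincr a b ltac:(lra)). lra.
    + exists g. split; [|split].
      * apply (lip_cont _ 2); [lra|]. intros a b.
        replace (a - b) with (H (g a) - H (g b)) by (rewrite !Hg; reflexivity).
        destruct (Rle_dec (g a) (g b)) as [Hab|Hab].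
        -- pose proof (Hincr _ _ Hab). rewrite (Rabs_left1 (g a - g b)) by lra.
           rewrite (Rabs_left1 (H (g a) - H (g b))) by lra. lra.
        -- pose proof (Hincr (g b) (g a) ltac:(lra)). rewrite (Rabs_right (g a - g b)) by lra.
           rewrite (Rabs_right (H (g a) - H (g b))) by lra. lra.
      * intros t. pose proof (Hg (H t)) as E.
        destruct (Rtotal_order (g (H t)) t) as [Hl|[Hl|Hl]]; [|exact Hl|].
        -- pose proof (Hincr _ _ (Rlt_le _ _ Hl)). lra.
        -- pose proof (Hincr _ _ (Rlt_le _ _ Hl)). lra.
      * exact Hg.
  - intros sg. unfold H.
    assert (L : RInt (fun _ => s sg - mu) sg (sg + h) <= RInt s sg (sg + h)).
    { apply RInt_le; [lra| apply ex_RInt_const| apply Hex|].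
      intros x Hx. pose proof (Hosc sg x ltac:(lra)). apply Rabs_def2 in H0. lra. }
    assert (U : RInt s sg (sg + h) <= RInt (fun _ => s sg + mu) sg (sg + h)).
    { apply RInt_le; [lra| apply Hex| apply ex_RInt_const|].
      intros x Hx. pose proof (Hosc sg x ltac:(lra)). apply Rabs_def2 in H0. lra. }
    rewrite !RInt_cst in L, U. replace (sg + h - sg) with h in L, U by ring.
    assert (E : RInt s sg (sg + h) / h - s sg = (RInt s sg (sg + h) - h * s sg) / h) by (field; lra).
    rewrite E. rewrite Rabs_div by lra. rewrite (Rabs_right h) by lra.
    apply Rmult_le_reg_r with h; [lra|]. unfold Rdiv. rewrite Rmult_assoc, Rinv_l, Rmult_1_r by lra.
    apply Rabs_le. nra.
Qed.

Section Flow.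
Variable X : MetricSpace.
Variable phi : R -> X -> X.
Hypothesis Hcomp : compact_space X.
Hypothesis Hflow : is_flow X phi.

Lemma d_refl (x : X) : d x x = 0.
Proof. apply d_eq0. reflexivity. Qed.

Lemma phi0 x : phi 0 x = x.
Proof. apply Hflow. Qed.

Lemma phiadd t s x : phi (t + s) x = phi t (phi s x).
Proof. apply Hflow. Qed.

Lemma phi_cont t x eps : 0 < eps -> exists delta, 0 < delta /\
      forall s y, Rabs (s - t) < delta -> d x y < delta -> d (phi t x) (phi s y) < eps.
Proof. apply Hflow. Qed.

Lemma phi_inv t x : phi (- t) (phi t x) = x.
Proof. rewrite <- phiadd. replace (-t + t) with 0 by ring. apply phi0. Qed.

Lemma dsym (x y : X) : d x y = d y x.
Proof. apply d_sym. Qed.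

Lemma dpos (x y : X) : 0 <= d x y.
Proof. apply d_nonneg. Qed.

Lemma tri (x y z : X) : d x z <= d x y + d y z.
Proof. apply d_triangle. Qed.

Lemma ball_open (z : X) r : Defs.open_set X (fun w => d z w < r).
Proof.
  intros x Hx. exists (r - d z x). split; [lra|].
  intros y Hy. pose proof (tri z x y). lra.
Qed.

Lemma cover (rad : X -> R) : (forall x, 0 < rad x) ->
  exists l : list X, forall y, exists z, In z l /\ d z y < rad z.
Proof.
  intros Hr.
  destruct (Hcomp X (fun z w => d z w < rad z)) as [l Hl].
  - intros i. apply ball_open.
  - intros x _. exists x. rewrite d_refl. apply Hr.
  - exists l. intros y. destruct (Hl y I) as [i [Hi1 Hi2]]. exists i; auto.
Qed.

Lemma U0 eps : 0 < eps -> exists eta, 0 < eta /\ forall t y, Rabs t < eta -> d y (phi t y) < eps.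
Proof.
  intros He.
  assert (H : forall x, exists r, 0 < r /\ forall s y, Rabs s < r -> d x y < r -> d x (phi s y) < eps/2).
  { intros x. destruct (phi_cont 0 x (eps/2)) as [r [Hr Hr']]; [lra|].
    exists r. split; [exact Hr|]. intros s y Hs Hy. rewrite <- (phi0 x) at 1.
    apply Hr'; [rewrite Rminus_0_r; exact Hs| exact Hy]. }
  destruct (mychoice _ H) as [rad Hrad].
  destruct (cover rad) as [l Hl]. { intro x. apply Hrad. }
  destruct (list_min rad l) as [m [Hm Hm']]. { intros z _. apply Hrad. }
  exists m. split; [exact Hm|]. intros t y Ht.
  destruct (Hl y) as [z [Hz Hzy]].
  pose proof (Hm' z Hz).
  assert (A1 : d z (phi t y) < eps/2) by (apply Hrad; lra).
  assert (A2 : d z (phi 0 y) < eps/2) by (apply Hrad; [rewrite Rabs_R0; apply Hrad| lra]).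
  rewrite phi0 in A2. pose proof (tri y z (phi t y)). rewrite d_sym in A2. lra.
Qed.

Lemma UT t eps : 0 < eps -> exists eta, 0 < eta /\ forall y y', d y y' < eta -> d (phi t y) (phi t y') < eps.
Proof.
  intros He.
  assert (H : forall x, exists r, 0 < r /\ forall y, d x y < r -> d (phi t x) (phi t y) < eps/2).
  { intros x. destruct (phi_cont t x (eps/2)) as [r [Hr Hr']]; [lra|].
    exists r. split; [exact Hr|]. intros y Hy. apply Hr'; [|exact Hy].
    rewrite Rminus_diag, Rabs_R0; exact Hr. }
  destruct (mychoice _ H) as [rad Hrad].
  destruct (cover (fun x => rad x / 2)) as [l Hl]. { intro x. pose proof (proj1 (Hrad x)). lra. }
  destruct (list_min (fun x => rad x / 2) l) as [m [Hm Hm']]. { intros z _. pose proof (proj1 (Hrad z)). lra. }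
  exists m. split; [exact Hm|]. intros y y' Hyy.
  destruct (Hl y) as [z [Hz Hzy]].
  pose proof (Hm' z Hz). simpl in *.
  assert (A1 : d (phi t z) (phi t y) < eps/2) by (apply Hrad; lra).
  assert (A2 : d (phi t z) (phi t y') < eps/2).
  { apply Hrad. pose proof (tri z y y'). lra. }
  pose proof (tri (phi t y) (phi t z) (phi t y')). rewrite d_sym in A1. lra.
Qed.

Lemma U0' eps : 0 < eps -> exists eta, 0 < eta /\ forall t a b, Rabs t < eta -> d a b < eta ->
  d (phi t a) (phi t b) < eps.
Proof.
  intros He. destruct (U0 (eps/3)) as [e [He1 He2]]; [lra|].
  exists (Rmin e (eps/3)). split. { apply Rmin_pos; lra. }
  intros t a b Ht Hab.
  pose proof (Rmin_l e (eps/3)). pose proof (Rmin_r e (eps/3)).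
  pose proof (He2 t a ltac:(lra)). pose proof (He2 t b ltac:(lra)).
  pose proof (tri (phi t a) a (phi t b)). pose proof (tri a b (phi t b)).
  rewrite (dsym (phi t a) a) in *. lra.
Qed.

Lemma UTR T eps : 0 < eps -> exists eta, 0 < eta /\ forall r y y', 0 <= r <= T -> d y y' < eta ->
  d (phi r y) (phi r y') < eps.
Proof.
  intros He. destruct (U0' eps He) as [e [He1 He2]].
  set (h := e/2).
  assert (Q : forall n : nat, exists eta, 0 < eta /\ forall r y y', 0 <= r <= INR n * h -> d y y' < eta ->
     d (phi r y) (phi r y') < eps).
  { induction n as [|n IH].
    - exists eps. split; [exact He|]. intros r y y' Hr Hy. simpl in Hr.
      replace r with 0 by lra. rewrite !phi0. exact Hy.
    - destruct IH as [e1 [He1' IH]].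
      destruct (UT (INR n * h) e He1) as [e2 [He2' Hu]].
      exists (Rmin e1 e2). split; [apply Rmin_pos; lra|].
      intros r y y' Hr Hy. pose proof (Rmin_l e1 e2). pose proof (Rmin_r e1 e2).
      destruct (Rle_dec r (INR n * h)) as [Hle|Hgt].
      + apply IH; [|lra]. split; [lra|exact Hle].
      + rewrite S_INR in Hr.
        replace r with ((r - INR n * h) + INR n * h) by ring. rewrite !phiadd.
        apply He2. { rewrite Rabs_right; unfold h in *; lra. }
        apply Hu. lra. }
  destruct (archimed (T / h)) as [Ha _].
  destruct (Q (Z.to_nat (up (T/h)))) as [eta [Heta HQ]].
  exists eta. split; [exact Heta|]. intros r y y' Hr Hy. apply HQ; [|exact Hy].
  split; [lra|]. 
  assert (Hh : 0 < h) by (unfold h; lra).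
  destruct (Z.le_gt_cases 0 (up (T/h))) as [Hz|Hz].
  - rewrite INR_IZR_INZ, Znat.Z2Nat.id by exact Hz.
    apply Rmult_lt_compat_r with (r:=h) in Ha; [|exact Hh].
    unfold Rdiv in Ha. rewrite Rmult_assoc, Rinv_l, Rmult_1_r in Ha by lra. lra.
  - exfalso. apply IZR_lt in Hz. 
    assert (T / h < 0) by (simpl in Hz; lra).
    assert (0 <= T / h) by (apply Rdiv_le_0_compat; lra). lra.
Qed.



Lemma per_nat T x : phi T x = x -> forall n, phi (INR n * T) x = x.
Proof.
  intros HT n. induction n as [|n IH].
  - simpl. rewrite Rmult_0_l. apply phi0.
  - rewrite S_INR. replace ((INR n + 1) * T) with (T + INR n * T) by ring.
    rewrite phiadd, IH. exact HT.
Qed.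

Lemma per_Z T x : phi T x = x -> forall z, phi (IZR z * T) x = x.
Proof.
  intros HT z. destruct (Z.le_gt_cases 0 z) as [Hz|Hz].
  - rewrite <- (Znat.Z2Nat.id z) by exact Hz. rewrite <- INR_IZR_INZ. apply per_nat; exact HT.
  - assert (E : z = (- Z.of_nat (Z.to_nat (- z)))%Z). { rewrite Znat.Z2Nat.id by lia. lia. }
    rewrite E, opp_IZR, <- INR_IZR_INZ.
    set (n := INR (Z.to_nat (- z))).
    replace (- n * T) with (- (n * T)) by ring.
    transitivity (phi (- (n * T)) (phi (n * T) x)).
    + unfold n. rewrite per_nat; auto.
    + apply phi_inv.
Qed.

Lemma per_shift T x z r : phi T x = x -> phi (IZR z * T + r) x = phi r x.
Proof. intros HT. rewrite Rplus_comm, phiadd, per_Z; auto. Qed.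

Lemma floor_ex T s : 0 < T -> exists z r, 0 <= r < T /\ s = IZR z * T + r.
Proof.
  intros HT. exists (Int_part (s / T)), (s - IZR (Int_part (s/T)) * T).
  destruct (base_Int_part (s / T)) as [H1 H2]. split; [|ring].
  assert (E : s = (s / T) * T) by (field; lra).
  split.
  - apply Rmult_le_compat_r with (r := T) in H1; lra.
  - assert (IZR (Int_part (s/T)) > s / T - 1) by lra.
    apply Rmult_gt_compat_r with (r := T) in H; [|lra]. 
    rewrite Rmult_minus_distr_r, <- E in H. lra.
Qed.

Lemma per_red T x s : 0 < T -> phi T x = x -> exists r, 0 <= r < T /\ phi s x = phi r x.
Proof.
  intros HT Hx. destruct (floor_ex T s HT) as [z [r [Hr Hs]]].
  exists r. split; [exact Hr|]. rewrite Hs. apply per_shift; exact Hx.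
Qed.

Lemma per_move T x s : phi T x = x -> phi T (phi s x) = phi s x.
Proof. intros H. rewrite <- phiadd, Rplus_comm, phiadd, H. reflexivity. Qed.

Lemma orbit_eq x v : orbit X phi (phi v x) = orbit X phi x.
Proof.
  apply functional_extensionality. intro z. apply propositional_extensionality.
  unfold orbit. split.
  - intros [t Ht]. exists (t + v). rewrite phiadd. exact Ht.
  - intros [t Ht]. exists (t - v). rewrite <- phiadd. replace (t - v + v) with t by ring. exact Ht.
Qed.

Lemma sing_phi z s : Sing X phi (phi s z) -> Sing X phi z.
Proof.
  intros H t. rewrite <- (phi_inv s z). rewrite <- phiadd.
  replace (t + - s) with (- s + t) by ring. rewrite phiadd, H. reflexivity.
Qed.

Lemma AWAY T eps : 0 < eps -> exists rho, 0 < rho /\ forall x T' sg, 0 < T' <= T -> phi T' x = x ->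
  Sing X phi sg -> forall s, d (phi s x) sg < rho -> forall s', d (phi s' x) sg < eps.
Proof.
  intros He. destruct (UTR T eps He) as [rho [Hr HU]]. exists rho. split; [exact Hr|].
  intros x T' sg HT Hx Hs s Hd s'.
  pose proof (per_move T' x s Hx) as Hw.
  destruct (per_red T' (phi s x) (s' - s) ltac:(lra) Hw) as [r [Hr' Hrw]].
  replace s' with ((s' - s) + s) by ring. rewrite phiadd, Hrw.
  rewrite <- (Hs r). apply HU; [lra| exact Hd].
Qed.


Lemma list_bound {A : Type} (f : A -> R) (l : list A) : exists M, forall z, In z l -> f z <= M.
Proof.
  induction l as [|a l [M HM]].
  - exists 0. intros z [].
  - exists (Rmax M (f a)). intros z [<-|Hz].
    + apply Rmax_r.
    + eapply Rle_trans; [apply HM; exact Hz| apply Rmax_l].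
Qed.

Lemma bounded : exists B, forall a b : X, d a b <= B.
Proof.
  destruct (cover (fun _ => 1)) as [l Hl]. { intros; lra. }
  destruct (list_bound (fun p : X * X => d (fst p) (snd p)) (list_prod l l)) as [M HM].
  exists (M + 2). intros a b.
  destruct (Hl a) as [za [Ha Ha']]. destruct (Hl b) as [zb [Hb Hb']].
  pose proof (HM (za, zb) (in_prod _ _ _ _ Ha Hb)). simpl in *.
  pose proof (tri a za b). pose proof (tri za zb b). rewrite dsym in Ha'. lra.
Qed.

Lemma diam_ge (a b : X) : d a b <= diam X.
Proof.
  destruct bounded as [B HB]. unfold diam.
  destruct (Lub_Rbar_correct (fun r => exists x y : X, r = d x y)) as [Hub Hl].
  assert (H1 : Rbar_le (d a b) (Lub_Rbar (fun r => exists x y : X, r = d x y))).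
  { apply Hub. exists a, b. reflexivity. }
  assert (H2 : Rbar_le (Lub_Rbar (fun r => exists x y : X, r = d x y)) B).
  { apply Hl. intros r [x [y ->]]. simpl. apply HB. }
  destruct (Lub_Rbar (fun r => exists x y : X, r = d x y)); simpl in *; tauto.
Qed.

Lemma dist_ge rho (w : X) : (forall sg, Sing X phi sg -> rho <= d w sg) ->
  Rmin rho (diam X) <= Defs.dist X w (Sing X phi).
Proof.
  intros H. unfold Defs.dist. destruct (excluded_middle_informative (exists a, Sing X phi a)) as [[a Ha]|Hn].
  - destruct (Glb_Rbar_correct (fun r => exists a, Sing X phi a /\ r = d w a)) as [Hlb Hg].
    assert (H1 : Rbar_le (Glb_Rbar (fun r => exists a, Sing X phi a /\ r = d w a)) (d w a)).
    { apply Hlb. exists a. split; auto. }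
    assert (H2 : Rbar_le rho (Glb_Rbar (fun r => exists a, Sing X phi a /\ r = d w a))).
    { apply Hg. intros r [b [Hb ->]]. simpl. apply H; exact Hb. }
    destruct (Glb_Rbar (fun r => exists a, Sing X phi a /\ r = d w a)); simpl in *; try tauto.
    eapply Rle_trans; [apply Rmin_l| exact H2].
  - apply Rmin_r.
Qed.

Lemma lin_homeo a : 0 < a -> increasing_homeo (fun t => t * a).
Proof.
  intros Ha. split; [|split].
  - intros u v Huv. apply Rmult_lt_compat_r; lra.
  - apply (lip_cont _ a Ha). intros u v. right.
    replace (u * a - v * a) with (a * (u - v)) by ring. rewrite Rabs_mult, Rabs_right by lra. ring.
  - exists (fun t => t / a). split; [|split].
    + apply (lip_cont _ (/ a)). { apply Rinv_0_lt_compat; lra. }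
      intros u v. right. replace (u / a - v / a) with (/ a * (u - v)) by (field; lra).
      rewrite Rabs_mult, (Rabs_right (/ a)); [ring|]. left; apply Rinv_0_lt_compat; lra.
    + intros t. field. lra.
    + intros t. field. lra.
Qed.


Lemma CLOSE Tm eps : 0 < eps -> exists r, 0 < r /\ forall (x x' : X) T T', 0 < T <= Tm -> d x x' < r ->
  Rabs (T' - T) < r -> forall s, 0 <= s <= T -> d (phi s x) (phi (s * (T' / T)) x') < eps.
Proof.
  intros He. destruct (UTR Tm (eps/2)) as [e1 [He1 H1]]; [lra|].
  destruct (U0 (eps/2)) as [e2 [He2 H2]]; [lra|].
  exists (Rmin e1 e2). split; [apply Rmin_pos; lra|].
  intros x x' T T' HT Hx HTT s Hs.
  pose proof (Rmin_l e1 e2). pose proof (Rmin_r e1 e2).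
  assert (A1 : d (phi s x) (phi s x') < eps/2) by (apply H1; lra).
  assert (A2 : d (phi s x') (phi (s * (T'/T)) x') < eps/2).
  { replace (s * (T'/T)) with ((s * (T'/T) - s) + s) by ring. rewrite phiadd. apply H2.
    replace (s * (T' / T) - s) with ((s / T) * (T' - T)) by (field; lra).
    rewrite Rabs_mult. 
    assert (0 <= s / T <= 1). { split. apply Rdiv_le_0_compat; lra.
      apply Rmult_le_reg_r with T; [lra|]. unfold Rdiv. rewrite Rmult_assoc, Rinv_l; lra. }
    rewrite (Rabs_right (s/T)) by lra.
    assert (s / T * Rabs (T' - T) <= Rabs (T' - T)).
    { rewrite <- (Rmult_1_l (Rabs (T' - T))) at 2. apply Rmult_le_compat_r; [apply Rabs_pos|lra]. }
    lra. }
  pose proof (tri (phi s x) (phi s x') (phi (s * (T'/T)) x')). lra.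
Qed.

Lemma PO_c x T : 0 < T -> phi T x = x -> ~ Sing X phi x ->
  exists c, 0 < c /\ forall s, c <= Defs.dist X (phi s x) (Sing X phi).
Proof.
  intros HT Hx Hn. apply not_all_ex_not in Hn. destruct Hn as [t1 Ht1].
  set (nu := d x (phi t1 x)).
  assert (Hnu : 0 < nu).
  { destruct (dpos x (phi t1 x)) as [H|H]; [exact H|]. exfalso. apply Ht1.
    symmetry. apply (proj1 (d_eq0 X x (phi t1 x))). symmetry. exact H. }
  destruct (AWAY T (nu/2)) as [rho [Hr HA]]; [lra|].
  exists (Rmin rho (diam X)). split.
  { apply Rmin_pos; [lra|]. pose proof (diam_ge x (phi t1 x)). unfold nu in *. lra. }
  intros s. apply dist_ge. intros sg Hsg.
  destruct (Rlt_le_dec (d (phi s x) sg) rho) as [Hl|Hl]; [|exact Hl].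
  exfalso. pose proof (HA x T sg ltac:(lra) Hx Hsg s Hl) as HB.
  pose proof (HB 0) as B0. pose proof (HB t1) as B1. rewrite phi0 in B0.
  pose proof (tri x sg (phi t1 x)). rewrite (dsym sg (phi t1 x)) in H. unfold nu in *. lra.
Qed.

Hypothesis Hse : singular_expansive X phi.

Lemma SHAD : exists del, 0 < del /\ forall (x x' : X) T T' c, 0 < T -> 0 < T' -> phi T x = x ->
  phi T' x' = x' -> (forall s, c <= Defs.dist X (phi s x) (Sing X phi)) ->
  (forall s, 0 <= s < T -> d (phi s x) (phi (s * (T' / T)) x') <= del * c) ->
  orbit X phi x' = orbit X phi x.
Proof.
  destruct (Hse 1) as [del [Hdel Hs]]; [lra|].
  exists del. split; [exact Hdel|].
  intros x x' T T' c HT HT' Hx Hx' Hc Hcl.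
  assert (Hh : increasing_homeo (fun t => t * (T' / T))).
  { apply lin_homeo. apply Rdiv_lt_0_compat; lra. }
  destruct (Hs x x' _ Hh) as [t0 [u [_ Hu]]].
  - intros t. destruct (floor_ex T t HT) as [z [r [Hr Ht]]].
    assert (E1 : phi t x = phi r x) by (rewrite Ht; apply per_shift; exact Hx).
    assert (E2 : t * (T' / T) = IZR z * T' + r * (T'/T)) by (rewrite Ht; field; lra).
    rewrite E2, per_shift by exact Hx'. rewrite E1.
    eapply Rle_trans; [apply Hcl; exact Hr|]. apply Rmult_le_compat_l; [lra|].
    rewrite <- E1. apply Hc.
  - rewrite <- (orbit_eq x (- (t0 * (T'/T)) + u)). f_equal.
    rewrite phiadd, <- Hu, phi_inv. reflexivity.
Qed.

Lemma P1loc x T : 0 < T -> phi T x = x -> ~ Sing X phi x -> exists r, 0 < r /\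
  forall (x' : X) T', 0 < T' -> phi T' x' = x' -> d x x' < r -> Rabs (T' - T) < r ->
  orbit X phi x' = orbit X phi x.
Proof.
  intros HT Hx Hn. destruct (PO_c x T HT Hx Hn) as [c [Hc Hcd]].
  destruct SHAD as [del [Hdel HS]].
  destruct (CLOSE T (del * c)) as [r [Hr HC]]. { apply Rmult_lt_0_compat; lra. }
  exists r. split; [exact Hr|]. intros x' T' HT' Hx' Hd HTT.
  apply (HS x x' T T' c HT HT' Hx Hx' Hcd).
  intros s Hs. left. apply (HC x x' T T'); try lra; auto.
Qed.


Lemma part1 : countable_family X (periodic_orbit X phi).
Proof.
  assert (Hlc : forall n : nat, exists l : list X, forall y, exists z, In z l /\ d z y < / (2 * (INR n + 1))).
  { intros n. destruct (cover (fun _ => / (2 * (INR n + 1)))) as [l Hl].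
    { intros _. apply Rinv_0_lt_compat. pose proof (pos_INR n). lra. }
    exists l. exact Hl. }
  destruct (mychoice _ Hlc) as [lc Hlc'].
  set (Code := fun (O : X -> Prop) (c : nat * nat * nat) => let '(n, i, k) := c in
     exists x T, O = orbit X phi x /\ 0 < T /\ phi T x = x /\
     (forall (x' : X) T', 0 < T' -> phi T' x' = x' -> d x x' < / (INR n + 1) ->
        Rabs (T' - T) < / (INR n + 1) -> orbit X phi x' = orbit X phi x) /\
     (i < length (lc n))%nat /\ d (nth i (lc n) x) x < / (2 * (INR n + 1)) /\
     k = Z.to_nat (Int_part (T * (2 * (INR n + 1))))).
  assert (Huniq : forall O O' c, Code O c -> Code O' c -> O = O').
  { intros O O' [[n i] k] [x [T [HO [HT [Hx [Hloc [Hi [Hd Hk]]]]]]]]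
      [x' [T' [HO' [HT' [Hx' [Hloc' [Hi' [Hd' Hk']]]]]]]].
    rewrite HO, HO'. symmetry. apply (Hloc x' T'); auto.
    - rewrite (nth_indep (lc n) x x' Hi) in Hd.
      pose proof (tri x (nth i (lc n) x') x'). rewrite dsym in Hd.
      assert (/ (2 * (INR n + 1)) + / (2 * (INR n + 1)) = / (INR n + 1)).
      { field. pose proof (pos_INR n). lra. }
      lra.
    - pose proof (pos_INR n).
      assert (Hm : 0 < 2 * (INR n + 1)) by lra.
      pose proof (Int_part_close (T' * (2 * (INR n + 1))) (T * (2 * (INR n + 1)))) as HIC.
      rewrite <- Hk, <- Hk' in HIC.
      specialize (HIC ltac:(nra) ltac:(nra) eq_refl).
      replace (T' * (2 * (INR n + 1)) - T * (2 * (INR n + 1))) with ((T' - T) * (2 * (INR n + 1))) in HIC by ring.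
      rewrite Rabs_mult, (Rabs_right (2 * (INR n + 1))) in HIC by lra.
      assert (Rabs (T' - T) < / (2 * (INR n + 1))).
      { apply Rmult_lt_reg_r with (2 * (INR n + 1)); [lra|]. rewrite Rinv_l by lra. lra. }
      assert (/ (2 * (INR n + 1)) < / (INR n + 1)).
      { apply Rinv_lt_contravar; nra. }
      lra. }
  assert (Hex : forall O, periodic_orbit X phi O -> exists c, Code O c).
  { intros O [x [[Hn [T [HT Hx]]] HO]].
    destruct (P1loc x T HT Hx Hn) as [r [Hr Hloc]].
    destruct (archimed (/ r)) as [Ha _].
    set (n := Z.to_nat (up (/ r))).
    assert (Hn1 : / (INR n + 1) < r).
    { assert (/ r < INR n + 1).
      { unfold n. destruct (Z.le_gt_cases 0 (up (/ r))) as [Hz|Hz].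
        - rewrite INR_IZR_INZ, Znat.Z2Nat.id by exact Hz. lra.
        - apply IZR_lt in Hz. pose proof (pos_INR (Z.to_nat (up (/r)))). simpl in Hz. lra. }
      rewrite <- (Rinv_inv r). apply Rinv_lt_contravar; [|exact H].
      apply Rmult_lt_0_compat; [apply Rinv_0_lt_compat; lra|]. pose proof (pos_INR n). lra. }
    destruct (Hlc' n x) as [z [Hz Hzd]].
    destruct (In_nth _ _ x Hz) as [i [Hi Hiz]].
    exists (n, i, Z.to_nat (Int_part (T * (2 * (INR n + 1))))).
    simpl. exists x, T. repeat split; auto.
    - intros x' T' HT' Hx' Hd HTT. apply (Hloc x' T'); auto; lra.
    - rewrite Hiz. exact Hzd. }
  assert (Hch : forall O, exists c, periodic_orbit X phi O -> Code O c).
  { intros O. destruct (classic (periodic_orbit X phi O)) as [H|H].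
    - destruct (Hex O H) as [c Hc]. exists c. intros _. exact Hc.
    - exists (0%nat, 0%nat, 0%nat). intros H'. contradiction. }
  destruct (mychoice _ Hch) as [g Hg].
  exists (fun O => match g O with (n, i, k) => npair n (npair i k) end).
  intros O1 O2 H1 H2 Heq.
  pose proof (Hg O1 H1) as C1. pose proof (Hg O2 H2) as C2.
  destruct (g O1) as [[n1 i1] k1]. destruct (g O2) as [[n2 i2] k2].
  apply npair_inj in Heq. destruct Heq as [-> Heq]. apply npair_inj in Heq. destruct Heq as [-> ->].
  exact (Huniq _ _ _ C1 C2).
Qed.


Lemma leb (K V : X -> Prop) : compact_set X K -> Defs.open_set X V -> (forall z, K z -> V z) ->
  exists e, 0 < e /\ forall sg w, K sg -> d sg w < e -> V w.
Proof.
  intros HK HV HKV.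
  assert (H : forall z, exists r, 0 < r /\ (K z -> forall w, d z w < r -> V w)).
  { intros z. destruct (classic (K z)) as [Kz|Kz].
    - destruct (HV z (HKV z Kz)) as [r [Hr Hr']]. exists r. split; auto.
    - exists 1. split; [lra|]. intros; contradiction. }
  destruct (mychoice _ H) as [rad Hrad].
  destruct (HK X (fun z w => K z /\ d z w < rad z / 2)) as [l Hl].
  - intros z w [Kz Hw]. exists (rad z / 2 - d z w). split; [lra|].
    intros y Hy. split; [exact Kz|]. pose proof (tri z w y). lra.
  - intros x Kx. exists x. split; [exact Kx|]. rewrite d_refl. pose proof (proj1 (Hrad x)). lra.
  - destruct (list_min (fun z => rad z / 2) l) as [e [He He']].
    { intros z _. pose proof (proj1 (Hrad z)). lra. }
    exists e. split; [exact He|]. intros sg w Ksg Hw.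
    destruct (Hl sg Ksg) as [i [Hi [Ki Hid]]].
    pose proof (He' i Hi). simpl in *.
    apply (proj2 (Hrad i) Ki). pose proof (tri i sg w). lra.
Qed.

Lemma part3 : dynamically_isolated X phi (Sing X phi) ->
   forall t, 0 < t -> finite_family X (periodic_orbit_period_le X phi t).
Proof.
  intros [HK [_ [U [[V [HV [HSV HVU]]] HKU]]]] t Ht.
  destruct (leb _ _ HK HV HSV) as [eV [HeV HeVV]].
  destruct (AWAY t eV HeV) as [rho [Hrho HA]].
  assert (Hfar : forall x T, periodic_point X phi x -> 0 < T <= t -> phi T x = x ->
     forall s sg, Sing X phi sg -> rho <= d (phi s x) sg).
  { intros x T [Hn _] HT Hx s sg Hsg.
    destruct (Rlt_le_dec (d (phi s x) sg) rho) as [Hl|Hl]; [|exact Hl].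
    exfalso. apply Hn. apply HKU. intros t'. exists (phi (- t') x). split.
    - apply HVU. apply (HeVV sg); [exact Hsg|]. rewrite dsym. exact (HA x T sg HT Hx Hsg s Hl (- t')).
    - rewrite <- phiadd. replace (t' + - t') with 0 by ring. rewrite phi0. reflexivity. }
  destruct (classic (exists z, ~ Sing X phi z)) as [[z0 Hz0]|Hnz].
  2:{ exists nil. intros O [x [T [[Hn _] _]]]. exfalso. apply Hnz. exists x. exact Hn. }
  assert (Hdiam : 0 < diam X).
  { apply not_all_ex_not in Hz0. destruct Hz0 as [t1 Ht1].
    pose proof (diam_ge z0 (phi t1 z0)).
    destruct (dpos z0 (phi t1 z0)) as [H1|H1]; [lra|]. exfalso. apply Ht1.
    symmetry. apply (proj1 (d_eq0 X z0 (phi t1 z0))). symmetry. exact H1. }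
  set (c := Rmin rho (diam X)).
  assert (Hc : 0 < c) by (apply Rmin_pos; lra).
  destruct SHAD as [del [Hdel HS]].
  destruct (CLOSE t (del * c)) as [r [Hr HC]]. { apply Rmult_lt_0_compat; lra. }
  destruct (cover (fun _ => r / 2)) as [l Hl]. { intros; lra. }
  set (Code := fun (O : X -> Prop) (cd : X * nat) => exists x T, periodic_point X phi x /\
     0 < T <= t /\ phi T x = x /\ O = orbit X phi x /\ d (fst cd) x < r / 2 /\
     snd cd = Z.to_nat (Int_part (T * (2 / r)))).
  assert (Huniq : forall O O' cd, Code O cd -> Code O' cd -> O = O').
  { intros O O' [z k] [x [T [Hp [HT [Hx [HO [Hd Hk]]]]]]] [x' [T' [Hp' [HT' [Hx' [HO' [Hd' Hk']]]]]]].
    simpl in *. rewrite HO, HO'. symmetry.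
    apply (HS x x' T T' c); try lra; auto.
    - intros s. apply dist_ge. intros sg Hsg. apply (Hfar x T); auto.
    - intros s Hs. left. apply (HC x x' T T'); try lra.
      + pose proof (tri x z x'). rewrite dsym in Hd. lra.
      + pose proof (Int_part_close (T' * (2 / r)) (T * (2 / r))) as HIC.
        rewrite <- Hk, <- Hk' in HIC.
        assert (0 < 2 / r) by (apply Rdiv_lt_0_compat; lra).
        specialize (HIC ltac:(nra) ltac:(nra) eq_refl).
        replace (T' * (2 / r) - T * (2 / r)) with ((T' - T) * (2 / r)) in HIC by ring.
        rewrite Rabs_mult, (Rabs_right (2 / r)) in HIC by lra.
        assert (Rabs (T' - T) < r / 2).
        { apply Rmult_lt_reg_r with (2 / r); [lra|].
          replace (r / 2 * (2 / r)) with 1 by (field; lra). lra. }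
        lra. }
  set (N := Z.to_nat (up (t * (2 / r)))).
  set (dummy := fun _ : X => False).
  exists (map (fun cd => epsilon (inhabits dummy) (fun O => Code O cd)) (list_prod l (seq 0 (S N)))).
  intros O [x [T [Hp [[HT [Hx _]] [HTt HO]]]]].
  destruct (Hl x) as [z [Hz Hzx]].
  set (k := Z.to_nat (Int_part (T * (2 / r)))).
  assert (HC0 : Code O (z, k)).
  { exists x, T. simpl. split; [exact Hp|]. repeat split; auto; lra. }
  assert (Hk : In k (seq 0 (S N))).
  { apply in_seq. split; [lia|]. unfold k, N.
    assert (H2r : 0 < 2 / r) by (apply Rdiv_lt_0_compat; lra).
    destruct (base_Int_part (T * (2 / r))) as [B1 _].
    destruct (archimed (t * (2 / r))) as [A1 _].
    assert (IZR (Int_part (T * (2 / r))) < IZR (up (t * (2 / r)))).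
    { assert (T * (2 / r) <= t * (2 / r)) by (apply Rmult_le_compat_r; lra). lra. }
    apply lt_IZR in H. pose proof (Int_part_nonneg (T * (2 / r)) ltac:(nra)). lia. }
  apply in_map_iff. exists (z, k). split.
  - apply (Huniq _ _ (z, k)); [|exact HC0].
    apply (epsilon_spec (inhabits dummy) (fun O => Code O (z, k))). exists O. exact HC0.
  - apply in_prod; assumption.
Qed.


Lemma iso_r0 : ((forall z, ~ Sing X phi z) \/
   (exists l : list X, (forall z, Sing X phi z <-> In z l) /\
      forall z, Sing X phi z -> isolated_point X z)) ->
  exists r0, 0 < r0 /\ forall sg y, Sing X phi sg -> d sg y < r0 -> y = sg.
Proof.
  intros [H|[l [Hl Hi]]].
  - exists 1. split; [lra|]. intros sg y Hs. exfalso. exact (H sg Hs).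
  - assert (Hr : forall z, exists r, 0 < r /\ (Sing X phi z -> forall y, d z y < r -> y = z)).
    { intros z. destruct (classic (Sing X phi z)) as [Hz|Hz].
      - destruct (Hi z Hz) as [r [Hr Hr']]. exists r. split; auto.
      - exists 1. split; [lra|]. intros; contradiction. }
    destruct (mychoice _ Hr) as [rad Hrad].
    destruct (list_min rad l) as [m [Hm Hm']]. { intros z _. apply Hrad. }
    exists m. split; [exact Hm|]. intros sg y Hs Hd.
    apply (proj2 (Hrad sg) Hs). pose proof (Hm' sg (proj1 (Hl sg) Hs)). lra.
Qed.

Section Iso.
Variable r0 : R.
Hypothesis Hr0 : 0 < r0.
Hypothesis Hiso : forall sg y, Sing X phi sg -> d sg y < r0 -> y = sg.

Lemma covN (P : X -> R -> Prop) : (forall z, ~ Sing X phi z -> exists r, 0 < r /\ P z r) ->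
  exists (rad : X -> R) l, (forall z, 0 < rad z) /\ (forall z, ~ Sing X phi z -> P z (rad z)) /\
   forall y, ~ Sing X phi y -> exists z, In z l /\ ~ Sing X phi z /\ d z y < rad z.
Proof.
  intros H.
  assert (H' : forall z, exists r, 0 < r /\ (~ Sing X phi z -> P z r) /\ (Sing X phi z -> r = r0)).
  { intros z. destruct (classic (Sing X phi z)) as [Hz|Hz].
    - exists r0. split; [lra|]. split; [intros; contradiction| auto].
    - destruct (H z Hz) as [r [Hr HP]]. exists r. split; [lra|]. split; [auto| intros; contradiction]. }
  destruct (mychoice _ H') as [rad Hrad].
  destruct (cover rad) as [l Hl]. { intros z. apply Hrad. }
  exists rad, l. split; [intros z; apply Hrad|]. split; [intros z; apply Hrad|].
  intros y Hy. destruct (Hl y) as [z [Hz Hzy]]. exists z. split; [exact Hz|]. split; [|exact Hzy].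
  intros Hsz. apply Hy. rewrite (proj2 (proj2 (Hrad z)) Hsz) in Hzy.
  rewrite (Hiso z y Hsz Hzy). exact Hsz.
Qed.

Lemma Ap0 : exists p0, 0 < p0 /\ forall z r, ~ Sing X phi z -> 0 < r <= p0 -> phi r z <> z.
Proof.
  destruct (covN (fun z rd => exists a, 0 < a /\ exists t, forall w, d z w < rd -> a < d w (phi t w)))
    as [rad [l [Hrp [HP Hcov]]]].
  { intros z Hz. apply not_all_ex_not in Hz. destruct Hz as [t1 Ht1].
    set (a0 := d z (phi t1 z)).
    assert (Ha0 : 0 < a0).
    { destruct (dpos z (phi t1 z)) as [H1|H1]; [exact H1|]. exfalso. apply Ht1.
      symmetry. apply (proj1 (d_eq0 X z (phi t1 z))). symmetry. exact H1. }
    destruct (phi_cont t1 z (a0/3)) as [dl [Hdl Hc]]; [lra|].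
    exists (Rmin dl (a0/3)). split; [apply Rmin_pos; lra|].
    exists (a0/3). split; [lra|]. exists t1. intros w Hw.
    pose proof (Rmin_l dl (a0/3)). pose proof (Rmin_r dl (a0/3)).
    assert (d (phi t1 z) (phi t1 w) < a0/3).
    { apply Hc; [rewrite Rminus_diag, Rabs_R0; lra| lra]. }
    pose proof (tri z w (phi t1 z)). pose proof (tri w (phi t1 w) (phi t1 z)).
    rewrite (dsym (phi t1 w) (phi t1 z)) in *. unfold a0 in *. lra. }
  assert (Ha : forall z, exists a, 0 < a /\ (~ Sing X phi z ->
     exists t, forall w, d z w < rad z -> a < d w (phi t w))).
  { intros z. destruct (classic (Sing X phi z)) as [Hz|Hz].
    - exists 1. split; [lra| intros; contradiction].
    - destruct (HP z Hz) as [a [Ha Ht]]. exists a. split; auto. }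
  destruct (mychoice _ Ha) as [af Haf].
  destruct (list_min af l) as [al [Hal Hal']]. { intros z _. apply Haf. }
  destruct (U0 al Hal) as [eta [Heta HU]].
  exists (eta / 2). split; [lra|]. intros z r Hz Hr Hrz.
  destruct (Hcov z Hz) as [c [Hc [Hcs Hcz]]].
  destruct (proj2 (Haf c) Hcs) as [t Ht]. specialize (Ht z Hcz).
  destruct (per_red r z t ltac:(lra) Hrz) as [r' [Hr' Hr'z]].
  rewrite Hr'z in Ht. pose proof (Hal' c Hc).
  assert (d z (phi r' z) < al) by (apply HU; rewrite Rabs_right; lra). lra.
Qed.

Lemma Bk p0 : (forall z r, ~ Sing X phi z -> 0 < r <= p0 -> phi r z <> z) ->
  forall mu, 0 < mu <= p0 -> exists k, 0 < k /\ forall z r, ~ Sing X phi z -> mu <= Rabs r <= p0 ->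
  k <= d z (phi r z).
Proof.
  intros HA mu Hmu.
  assert (Hpos : exists k, 0 < k /\ forall z r, ~ Sing X phi z -> mu <= r <= p0 -> k <= d z (phi r z)).
  { destruct (covN (fun z rd => exists m, 0 < m /\ forall w, d z w < rd -> forall r, mu <= r <= p0 ->
        m <= d w (phi r w))) as [rad [l [Hrp [HP Hcov]]]].
    { intros z Hz.
      destruct (continuity_ab_min (fun r => d z (phi r z)) mu p0) as [rm [Hrm1 Hrm2]]; [lra| |].
      { intros c _. apply cont_from. intros e He.
        destruct (phi_cont c z e He) as [dl [Hdl Hc]]. exists dl. split; [exact Hdl|].
        intros y Hy. pose proof (Hc y z Hy ltac:(rewrite d_refl; lra)).
        pose proof (tri z (phi c z) (phi y z)). pose proof (tri z (phi y z) (phi c z)).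
        rewrite (dsym (phi y z) (phi c z)) in *. apply Rabs_def1; lra. }
      set (m0 := d z (phi rm z)).
      assert (Hm0 : 0 < m0).
      { destruct (dpos z (phi rm z)) as [H1|H1]; [exact H1|]. exfalso. apply (HA z rm Hz); [lra|].
        symmetry. apply (proj1 (d_eq0 X z (phi rm z))). symmetry. exact H1. }
      destruct (UTR p0 (m0/3)) as [eta [Heta HU]]; [lra|].
      exists (Rmin eta (m0/3)). split; [apply Rmin_pos; lra|].
      exists (m0/3). split; [lra|]. intros w Hw r Hr.
      pose proof (Rmin_l eta (m0/3)). pose proof (Rmin_r eta (m0/3)).
      assert (d (phi r z) (phi r w) < m0/3) by (apply HU; lra).
      pose proof (Hrm1 r Hr). simpl in *.
      pose proof (tri z w (phi r z)). pose proof (tri w (phi r w) (phi r z)).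
      rewrite (dsym (phi r w) (phi r z)) in *. unfold m0 in *. lra. }
    assert (Hm : forall z, exists m, 0 < m /\ (~ Sing X phi z -> forall w, d z w < rad z ->
        forall r, mu <= r <= p0 -> m <= d w (phi r w))).
    { intros z. destruct (classic (Sing X phi z)) as [Hz|Hz].
      - exists 1. split; [lra| intros; contradiction].
      - destruct (HP z Hz) as [m [Hm Hm']]. exists m. split; auto. }
    destruct (mychoice _ Hm) as [mf Hmf].
    destruct (list_min mf l) as [k [Hk Hk']]. { intros z _. apply Hmf. }
    exists k. split; [exact Hk|]. intros z r Hz Hr.
    destruct (Hcov z Hz) as [c [Hc [Hcs Hcz]]].
    pose proof (Hk' c Hc). pose proof (proj2 (Hmf c) Hcs z Hcz r Hr). lra. }
  destruct Hpos as [k [Hk HK]]. exists k. split; [exact Hk|].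
  intros z r Hz Hr. destruct (Rle_dec 0 r) as [Hr0'|Hr0'].
  - rewrite Rabs_right in Hr by lra. apply HK; auto.
  - rewrite Rabs_left in Hr by lra.
    set (z' := phi r z).
    assert (Hz' : ~ Sing X phi z') by (intros H; apply Hz; exact (sing_phi z r H)).
    assert (E : phi (- r) z' = z) by (unfold z'; apply phi_inv).
    rewrite dsym. fold z'. rewrite <- E. apply HK; auto; lra.
Qed.


Lemma part2_iso : expansive X phi.
Proof.
  unfold expansive, expansive_on. intros eps Heps.
  destruct Ap0 as [p0 [Hp0 HA]].
  pose proof (Bk p0 HA) as HB.
  destruct (Rlt_le_dec 0 (diam X)) as [Hdiam|Hdiam].
  2:{ exists 1. split; [lra|]. intros x y s _ _ _ _ _. exists 0. split; [lra|].
      rewrite phi0. symmetry. apply (proj1 (d_eq0 X x y)). pose proof (diam_ge x y). pose proof (dpos x y). lra. }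
  set (c := Rmin r0 (diam X)).
  assert (Hc : 0 < c) by (apply Rmin_pos; lra).
  assert (Hcd : forall z, ~ Sing X phi z -> c <= Defs.dist X z (Sing X phi)).
  { intros z Hz. apply dist_ge. intros sg Hsg. destruct (Rlt_le_dec (d z sg) r0) as [Hl|Hl]; [|exact Hl].
    exfalso. apply Hz. rewrite dsym in Hl. rewrite (Hiso sg z Hsg Hl). exact Hsg. }
  set (mu3 := Rmin eps p0).
  assert (Hmu3 : 0 < mu3 /\ mu3 <= eps /\ mu3 <= p0).
  { unfold mu3. split; [apply Rmin_pos; lra|]. split; [apply Rmin_l| apply Rmin_r]. }
  destruct (HB mu3 ltac:(lra)) as [k3 [Hk3 HB3]].
  destruct (Hse (mu3/2) ltac:(lra)) as [dse [Hdse HSE]].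
  destruct (U0 (dse * c / 2)) as [eta0 [Heta0 HU0]]. { apply Rdiv_lt_0_compat; [|lra]. apply Rmult_lt_0_compat; lra. }
  set (mu1 := Rmin (mu3/2) (Rmin (p0/2) (eta0/2))).
  assert (Hmu1 : 0 < mu1 /\ mu1 <= mu3/2 /\ mu1 <= p0/2 /\ mu1 <= eta0/2).
  { unfold mu1. pose proof (Rmin_l (mu3/2) (Rmin (p0/2) (eta0/2))). pose proof (Rmin_r (mu3/2) (Rmin (p0/2) (eta0/2))).
    pose proof (Rmin_l (p0/2) (eta0/2)). pose proof (Rmin_r (p0/2) (eta0/2)).
    split; [repeat apply Rmin_pos; lra| lra]. }
  destruct (HB mu1 ltac:(lra)) as [k1 [Hk1 HB1]].
  destruct (U0 (k1/4)) as [eta1 [Heta1 HU1]]; [lra|].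
  set (h := Rmin (mu1/2) (eta1/2)).
  assert (Hh : 0 < h /\ h <= mu1/2 /\ h <= eta1/2).
  { unfold h. split; [apply Rmin_pos; lra|]. split; [apply Rmin_l| apply Rmin_r]. }
  destruct (HB (h/2) ltac:(lra)) as [k2 [Hk2 HB2]].
  destruct (UT h (k2/2)) as [om [Hom HUT]]; [lra|].
  set (del := Rmin (Rmin (Rmin r0 k1) (Rmin k2 om)) (Rmin k3 (dse * c)) / 4).
  assert (Hdel : 0 < del /\ del <= r0/4 /\ del <= k1/4 /\ del <= k2/4 /\ del <= om/4 /\ del <= k3/4 /\ del <= dse * c / 4).
  { unfold del.
    pose proof (Rmin_l (Rmin (Rmin r0 k1) (Rmin k2 om)) (Rmin k3 (dse * c))).
    pose proof (Rmin_r (Rmin (Rmin r0 k1) (Rmin k2 om)) (Rmin k3 (dse * c))).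
    pose proof (Rmin_l (Rmin r0 k1) (Rmin k2 om)). pose proof (Rmin_r (Rmin r0 k1) (Rmin k2 om)).
    pose proof (Rmin_l r0 k1). pose proof (Rmin_r r0 k1). pose proof (Rmin_l k2 om). pose proof (Rmin_r k2 om).
    pose proof (Rmin_l k3 (dse * c)). pose proof (Rmin_r k3 (dse * c)).
    assert (0 < dse * c) by (apply Rmult_lt_0_compat; lra).
    split; [|lra]. apply Rdiv_lt_0_compat; [|lra]. repeat apply Rmin_pos; lra. }
  exists del. split; [lra|].
  intros x y s _ _ Hsc Hs0 Hcl.
  assert (Hxy : d x y <= del) by (pose proof (Hcl 0) as H0; rewrite phi0, Hs0, phi0 in H0; exact H0).
  destruct (classic (Sing X phi x)) as [Hx|Hx].
  { exists 0. split; [lra|]. rewrite phi0. apply (Hiso x y Hx). lra. }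
  assert (Hy : ~ Sing X phi y).
  { intros Hy. apply Hx. rewrite dsym in Hxy. rewrite (Hiso y x Hy ltac:(lra)). exact Hy. }
  assert (HxN : forall t, ~ Sing X phi (phi t x)) by (intros t Ht; apply Hx; exact (sing_phi x t Ht)).
  assert (HyN : forall t, ~ Sing X phi (phi t y)) by (intros t Ht; apply Hy; exact (sing_phi y t Ht)).
  assert (Hno : forall sg t2, sg <= t2 <= sg + h -> s t2 - s sg = mu1 \/ s t2 - s sg = - mu1 -> False).
  { intros sg t2 Ht2 Hv.
    set (w := phi (s sg) y).
    set (r := s t2 - s sg).
    assert (E : phi r w = phi (s t2) y) by (unfold w, r; rewrite <- phiadd; f_equal; ring).
    assert (B : k1 <= d w (phi r w)).
    { apply HB1; [unfold w; apply HyN|]. unfold r. destruct Hv as [-> | ->];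
      [rewrite Rabs_right| rewrite Rabs_Ropp, Rabs_right]; lra. }
    rewrite E in B.
    pose proof (Hcl sg) as C1. pose proof (Hcl t2) as C2.
    assert (C3 : d (phi sg x) (phi t2 x) < k1/4).
    { replace t2 with ((t2 - sg) + sg) by ring. rewrite phiadd. apply HU1. rewrite Rabs_right; lra. }
    pose proof (tri w (phi sg x) (phi (s t2) y)). pose proof (tri (phi sg x) (phi t2 x) (phi (s t2) y)).
    fold w in C1. rewrite dsym in C1. lra. }
  assert (Hosc : forall sg sg', sg <= sg' <= sg + h -> Rabs (s sg' - s sg) < mu1).
  { intros sg sg' Hs. destruct (Rlt_le_dec (Rabs (s sg' - s sg)) mu1) as [Hl|Hl]; [exact Hl|]. exfalso.
    destruct (Rle_dec 0 (s sg' - s sg)) as [Hp|Hp].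
    - rewrite Rabs_right in Hl by lra.
      destruct (ivt_between s sg sg' (s sg + mu1) Hsc ltac:(lra)) as [t2 [Ht2 Ht2']].
      { assert (s sg - (s sg + mu1) <= 0) by lra. assert (0 <= s sg' - (s sg + mu1)) by lra. nra. }
      apply (Hno sg t2); [lra| left; lra].
    - rewrite Rabs_left in Hl by lra.
      destruct (ivt_between s sg sg' (s sg - mu1) Hsc ltac:(lra)) as [t2 [Ht2 Ht2']].
      { assert (0 <= s sg - (s sg - mu1)) by lra. assert (s sg' - (s sg - mu1) <= 0) by lra. nra. }
      apply (Hno sg t2); [lra| right; lra]. }
  assert (Hinc : forall sg, Rabs (s (sg + h) - s sg - h) < h / 2).
  { intros sg. pose proof (Hosc sg (sg + h) ltac:(lra)) as HD.
    set (w := phi (s sg) y). set (p := phi sg x).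
    assert (W1 : d p w <= del) by apply Hcl.
    assert (W2 : d (phi h p) (phi h w) < k2/2) by (apply HUT; lra).
    assert (W3 : phi h p = phi (sg + h) x) by (unfold p; rewrite <- phiadd; f_equal; ring).
    pose proof (Hcl (sg + h)) as W4.
    set (r := s (sg + h) - s sg - h).
    assert (E : phi r (phi h w) = phi (s (sg + h)) y) by (unfold w, r; rewrite <- !phiadd; f_equal; ring).
    destruct (Rlt_le_dec (Rabs r) (h/2)) as [Hl|Hl]; [exact Hl|]. exfalso.
    assert (B : k2 <= d (phi h w) (phi r (phi h w))).
    { apply HB2; [unfold w; rewrite <- phiadd; apply HyN|]. split; [exact Hl|].
      unfold r. pose proof (Rabs_triang (s (sg + h) - s sg) (- h)). rewrite Rabs_Ropp, (Rabs_right h) in H by lra.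
      replace (s (sg + h) - s sg + - h) with (s (sg + h) - s sg - h) in H by ring. lra. }
    rewrite E in B. rewrite W3 in W2.
    pose proof (tri (phi h w) (phi (sg + h) x) (phi (s (sg + h)) y)). rewrite dsym in W2. lra. }
  destruct (smooth_homeo s h mu1 Hsc ltac:(lra) Hinc Hosc) as [Hm [Hhom Hmc]].
  destruct (HSE x y Hm Hhom) as [t0 [u [Hu Hu']]].
  { intros t. eapply Rle_trans; [|apply Rmult_le_compat_l; [lra| apply Hcd, HxN]].
    pose proof (Hcl t) as C1.
    assert (C2 : d (phi (s t) y) (phi (Hm t) y) < dse * c / 2).
    { replace (Hm t) with ((Hm t - s t) + s t) by ring. rewrite phiadd. apply HU0.
      pose proof (Hmc t). lra. }
    pose proof (tri (phi t x) (phi (s t) y) (phi (Hm t) y)). lra. }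
  set (v := u - Hm t0).
  assert (Hyv : y = phi v x).
  { unfold v. replace (u - Hm t0) with (- Hm t0 + u) by ring. rewrite phiadd, <- Hu', phi_inv. reflexivity. }
  set (f := fun t => s t + v - t).
  assert (Hf : continuity f).
  { unfold f. apply continuity_minus; [apply continuity_plus; [exact Hsc|]|].
    - apply continuity_const; intros ? ?; reflexivity.
    - apply derivable_continuous, derivable_id. }
  assert (Hkey : forall t, ~ (mu3 <= Rabs (f t) <= p0)).
  { intros t Ht. pose proof (HB3 (phi t x) (f t) (HxN t) Ht) as B.
    assert (E : phi (f t) (phi t x) = phi (s t) y).
    { rewrite Hyv, <- !phiadd. f_equal. unfold f. ring. }
    rewrite E in B. pose proof (Hcl t). lra. }
  assert (Hft0 : Rabs (f t0) < mu3).
  { assert (Rabs (f t0) <= mu3).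
    { unfold f, v. replace (s t0 + (u - Hm t0) - t0) with (- (Hm t0 - s t0) + (u - t0)) by ring.
      eapply Rle_trans; [apply Rabs_triang|]. rewrite Rabs_Ropp. pose proof (Hmc t0).
      assert (Rabs (u - t0) <= mu3 / 2) by (apply Rabs_le; lra). lra. }
    destruct H as [H|H]; [exact H|]. exfalso. apply (Hkey t0). lra. }
  assert (Hf0 : Rabs (f 0) < mu3).
  { destruct (Rlt_le_dec (Rabs (f 0)) mu3) as [Hl|Hl]; [exact Hl|]. exfalso.
    destruct (Rle_dec (Rabs (f 0)) p0) as [Hp|Hp]; [apply (Hkey 0); lra|].
    assert (Hex : exists t, Rabs (f t) = mu3).
    { destruct (Rle_dec 0 (f 0)) as [Hs|Hs].
      - rewrite Rabs_right in Hl by lra. apply Rabs_def2 in Hft0.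
        assert (Hpr : (f (Rmin t0 0) - mu3) * (f (Rmax t0 0) - mu3) <= 0).
        { unfold Rmin, Rmax. destruct (Rle_dec t0 0); nra. }
        destruct (ivt_between f _ _ mu3 Hf (Rmin_le_Rmax t0 0) Hpr) as [t [_ Ht]].
        exists t. rewrite Ht. apply Rabs_right; lra.
      - rewrite Rabs_left in Hl by lra. apply Rabs_def2 in Hft0.
        assert (Hpr : (f (Rmin t0 0) - - mu3) * (f (Rmax t0 0) - - mu3) <= 0).
        { unfold Rmin, Rmax. destruct (Rle_dec t0 0); nra. }
        destruct (ivt_between f _ _ (- mu3) Hf (Rmin_le_Rmax t0 0) Hpr) as [t [_ Ht]].
        exists t. rewrite Ht, Rabs_Ropp. apply Rabs_right; lra. }
    destruct Hex as [t Ht]. apply (Hkey t). lra. }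
  exists v. split.
  - assert (f 0 = v) by (unfold f; rewrite Hs0; ring). rewrite H in Hf0. apply Rabs_def2 in Hf0. lra.
  - exact Hyv.
Qed.

End Iso.

End Flow.

Theorem mainTheorem9 (X : MetricSpace) (phi : R -> X -> X) :
  compact_space X -> is_flow X phi -> singular_expansive X phi ->
  countable_family X (periodic_orbit X phi) /\
  ((forall z, ~ Sing X phi z) \/
   (exists l : list X, (forall z, Sing X phi z <-> In z l) /\
      forall z, Sing X phi z -> isolated_point X z) ->
   expansive X phi) /\
  (dynamically_isolated X phi (Sing X phi) ->
   forall t, 0 < t -> finite_family X (periodic_orbit_period_le X phi t)).
Proof.
  intros Hc Hf Hse. split; [|split].
  - exact (part1 X phi Hc Hf Hse).
  - intros H. destruct (iso_r0 X phi H) as [r0 [Hr0 Hiso]].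
    exact (part2_iso X phi Hc Hf Hse r0 Hr0 Hiso).
  - exact (part3 X phi Hc Hf Hse).
Qed.
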